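(* Let $e_1<e_2<e_3<e_4$ be distinct reals and consider the reduced ellipsoidal integrable system $(\eta_1,\eta_2):M_h\to\mathbb R^2$ with $2h=1$, where $\eta_1=\sum_{i<j}\ell_{ij}^2\sum_{k\ne i,j}e_k$ and $\eta_2=\sum_{i<j}\ell_{ij}^2\prod_{k\ne i,j}e_k$. The set of critical values is composed of (parts of) four straight lines and a quadratic curve: the lines $\mathcal L_i:\ \eta_2-e_i(\eta_1-e_i)=0$, $i\in\{1,2,3,4\}$, and the part of the parabola $\eta_2=\eta_1^2/4$ given by $\mathcal C:(\eta_1,\eta_2)=(2t,t^2)$, $e_2\le t\le e_3$. There are six transverse intersections $\mathcal L_i\cap\mathcal L_j$ ($i\neq j$), occurring at $d_{ij}=(e_i+e_j,e_ie_j)$, and the points $d_i=(2e_i,e_i^2)$, $i\in\{2,3\}$, are the two tangential intersections of $\mathcal L_2$ and $\mathcal L_3$ with $\mathcal C$.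
   Context: $\mathbf L=(\ell_{12},\ell_{13},\ell_{14},\ell_{23},\ell_{24},\ell_{34})\in\mathbb R^6\cong\mathfrak{so}(4)^*$ with the Lie–Poisson bracket of $\mathfrak{so}(4)$ (extending $\ell_{ji}=-\ell_{ij}$: $\{\ell_{ij},\ell_{jk}\}=-\ell_{ik}$ for distinct $i,j,k$, and $\{\ell_{ij},\ell_{kl}\}=0$ when $\{i,j\}\cap\{k,l\}=\emptyset$). $M_h=\{\mathbf L:\sum_{i<j}\ell_{ij}^2=2h,\ \ell_{12}\ell_{34}-\ell_{13}\ell_{24}+\ell_{14}\ell_{23}=0\}\cong S^2\times S^2$ is a symplectic leaf; this system is the reduction of the geodesic flow on $S^3$ separated in ellipsoidal coordinates. *)

(* Defs.v *)
From Stdlib Require Import Reals.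
From Coquelicot Require Import Coquelicot.
Open Scope R_scope.

(* A point L = (l12,l13,l14,l23,l24,l34) of R^6 ~ so(4)^*. *)
Record L6 := mkL6 { l12 : R; l13 : R; l14 : R; l23 : R; l24 : R; l34 : R }.

Definition L6add (L V : L6) : L6 :=
  mkL6 (l12 L + l12 V) (l13 L + l13 V) (l14 L + l14 V)
       (l23 L + l23 V) (l24 L + l24 V) (l34 L + l34 V).

Definition L6scale (s : R) (V : L6) : L6 :=
  mkL6 (s * l12 V) (s * l13 V) (s * l14 V) (s * l23 V) (s * l24 V) (s * l34 V).

Definition dderiv (f : L6 -> R) (L V : L6) : R :=
  Derive (fun s => f (L6add L (L6scale s V))) 0.

Definition Cas1 (L : L6) : R :=
  l12 L ^ 2 + l13 L ^ 2 + l14 L ^ 2 + l23 L ^ 2 + l24 L ^ 2 + l34 L ^ 2.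
Definition Cas2 (L : L6) : R :=
  l12 L * l34 L - l13 L * l24 L + l14 L * l23 L.

Definition in_Mh (twoh : R) (L : L6) : Prop := Cas1 L = twoh /\ Cas2 L = 0.

Definition eta1 (e1 e2 e3 e4 : R) (L : L6) : R :=
  l12 L ^ 2 * (e3 + e4) + l13 L ^ 2 * (e2 + e4) + l14 L ^ 2 * (e2 + e3)
  + l23 L ^ 2 * (e1 + e4) + l24 L ^ 2 * (e1 + e3) + l34 L ^ 2 * (e1 + e2).

Definition eta2 (e1 e2 e3 e4 : R) (L : L6) : R :=
  l12 L ^ 2 * (e3 * e4) + l13 L ^ 2 * (e2 * e4) + l14 L ^ 2 * (e2 * e3)
  + l23 L ^ 2 * (e1 * e4) + l24 L ^ 2 * (e1 * e3) + l34 L ^ 2 * (e1 * e2).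

Definition tangent_Mh (L V : L6) : Prop :=
  dderiv Cas1 L V = 0 /\ dderiv Cas2 L V = 0.

(* L is a critical point of F = (eta1, eta2) restricted to M_h:
   the differential dF_L restricted to T_L M_h has rank < 2, i.e.
   some nonzero covector (a,b) annihilates dF_L(T_L M_h). *)
Definition critical_point (e1 e2 e3 e4 twoh : R) (L : L6) : Prop :=
  in_Mh twoh L /\
  exists a b : R, (a <> 0 \/ b <> 0) /\
    forall V : L6, tangent_Mh L V ->
      a * dderiv (eta1 e1 e2 e3 e4) L V + b * dderiv (eta2 e1 e2 e3 e4) L V = 0.

Definition critical_value (e1 e2 e3 e4 twoh : R) (p : R * R) : Prop :=
  exists L : L6, critical_point e1 e2 e3 e4 twoh L /\
    p = (eta1 e1 e2 e3 e4 L, eta2 e1 e2 e3 e4 L).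

Definition on_line (ei : R) (p : R * R) : Prop := snd p - ei * (fst p - ei) = 0.

Definition on_C (e2 e3 : R) (p : R * R) : Prop :=
  exists t, e2 <= t <= e3 /\ p = (2 * t, t ^ 2).

Definition on_parabola (p : R * R) : Prop := snd p = fst p ^ 2 / 4.

(* Main.v *)
Require Import Defs.
From Stdlib Require Import Reals.
From Coquelicot Require Import Coquelicot.
Open Scope R_scope.
From Stdlib Require Import Lra Lia.

Ltac prj := cbn [l12 l13 l14 l23 l24 l34 fst snd] in *.

Lemma dd_Cas1 L V : dderiv Cas1 L V =
  2*(l12 L*l12 V + l13 L*l13 V + l14 L*l14 V + l23 L*l23 V + l24 L*l24 V + l34 L*l34 V).
Proof.
  unfold dderiv. apply is_derive_unique. unfold Cas1, L6add, L6scale; simpl.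
  auto_derive; [auto| ring].
Qed.
Lemma dd_Cas2 L V : dderiv Cas2 L V =
  l34 L*l12 V + l12 L*l34 V - l24 L*l13 V - l13 L*l24 V + l23 L*l14 V + l14 L*l23 V.
Proof.
  unfold dderiv. apply is_derive_unique. unfold Cas2, L6add, L6scale; simpl.
  auto_derive; [auto| ring].
Qed.
Lemma dd_eta1 e1 e2 e3 e4 L V : dderiv (eta1 e1 e2 e3 e4) L V =
  2*(l12 L*l12 V*(e3+e4) + l13 L*l13 V*(e2+e4) + l14 L*l14 V*(e2+e3)
   + l23 L*l23 V*(e1+e4) + l24 L*l24 V*(e1+e3) + l34 L*l34 V*(e1+e2)).
Proof.
  unfold dderiv. apply is_derive_unique. unfold eta1, L6add, L6scale; simpl.
  auto_derive; [auto| ring].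
Qed.
Lemma dd_eta2 e1 e2 e3 e4 L V : dderiv (eta2 e1 e2 e3 e4) L V =
  2*(l12 L*l12 V*(e3*e4) + l13 L*l13 V*(e2*e4) + l14 L*l14 V*(e2*e3)
   + l23 L*l23 V*(e1*e4) + l24 L*l24 V*(e1*e3) + l34 L*l34 V*(e1*e2)).
Proof.
  unfold dderiv. apply is_derive_unique. unfold eta2, L6add, L6scale; simpl.
  auto_derive; [auto| ring].
Qed.

Lemma crit_suff e1 e2 e3 e4 L a b mu nu :
  in_Mh 1 L -> (a <> 0 \/ b <> 0) ->
  (forall V, a * dderiv (eta1 e1 e2 e3 e4) L V + b * dderiv (eta2 e1 e2 e3 e4) L V
     = mu * dderiv Cas1 L V + nu * dderiv Cas2 L V) ->
  critical_point e1 e2 e3 e4 1 L.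
Proof.
  intros HM Hab Hid. split; [exact HM|]. exists a, b. split; [exact Hab|].
  intros V [H1 H2]. rewrite Hid, H1, H2. ring.
Qed.

Ltac crit_tac a b mu nu :=
  apply (crit_suff _ _ _ _ _ a b mu nu);
  [ split; unfold Cas1, Cas2; simpl; try lra; try ring
  | right; lra
  | intro V; rewrite dd_eta1, dd_eta2, dd_Cas1, dd_Cas2; simpl; ring ].

Lemma line1_crit e1 e2 e3 e4 x23 x24 x34 :
  x23^2 + x24^2 + x34^2 = 1 ->
  critical_point e1 e2 e3 e4 1 (mkL6 0 0 0 x23 x24 x34).
Proof. intro H. crit_tac (-e1) 1 (-e1^2) 0. Qed.
Lemma line2_crit e1 e2 e3 e4 x13 x14 x34 :
  x13^2 + x14^2 + x34^2 = 1 ->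
  critical_point e1 e2 e3 e4 1 (mkL6 0 x13 x14 0 0 x34).
Proof. intro H. crit_tac (-e2) 1 (-e2^2) 0. Qed.
Lemma line3_crit e1 e2 e3 e4 x12 x14 x24 :
  x12^2 + x14^2 + x24^2 = 1 ->
  critical_point e1 e2 e3 e4 1 (mkL6 x12 0 x14 0 x24 0).
Proof. intro H. crit_tac (-e3) 1 (-e3^2) 0. Qed.
Lemma line4_crit e1 e2 e3 e4 x12 x13 x23 :
  x12^2 + x13^2 + x23^2 = 1 ->
  critical_point e1 e2 e3 e4 1 (mkL6 x12 x13 0 x23 0 0).
Proof. intro H. crit_tac (-e4) 1 (-e4^2) 0. Qed.

Lemma arc_crit e1 e2 e3 e4 t r1 r2 r3 r4 c :
  e1 = t - r1^2 -> e2 = t - r2^2 -> e3 = t + r3^2 -> e4 = t + r4^2 ->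
  c^2 * ((r1^2 + r4^2) * (r2^2 + r3^2)) = 1 ->
  let L := mkL6 (c*r1*r2) (c*r1*r3) 0 0 (c*r2*r4) (c*r3*r4) in
  critical_point e1 e2 e3 e4 1 L /\ eta1 e1 e2 e3 e4 L = 2*t /\ eta2 e1 e2 e3 e4 L = t^2.
Proof.
  intros -> -> -> -> Hc L. split; [|split].
  - apply (crit_suff _ _ _ _ _ (-t) 1 (-t^2) (2*r1*r2*r3*r4)).
    + split; unfold Cas1, Cas2; simpl; [|ring].
      transitivity (c^2 * ((r1^2 + r4^2) * (r2^2 + r3^2))); [ring|exact Hc].
    + right; lra.
    + intro V; rewrite dd_eta1, dd_eta2, dd_Cas1, dd_Cas2; simpl; ring.
  - unfold eta1; simpl.
    transitivity (2*t*(c^2 * ((r1^2 + r4^2) * (r2^2 + r3^2)))); [ring| rewrite Hc; ring].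
  - unfold eta2; simpl.
    transitivity (t^2*(c^2 * ((r1^2 + r4^2) * (r2^2 + r3^2)))); [ring| rewrite Hc; ring].
Qed.

Lemma bad_gen ei ej ek em en a b mu :
  ej <> ek -> em <> ei -> en <> ei -> (a <> 0 \/ b <> 0) ->
  2*a*(ei+ej) + 2*b*(ei*ej) - mu = 0 ->
  2*a*(ei+ek) + 2*b*(ei*ek) - mu = 0 ->
  2*a*(em+en) + 2*b*(em*en) - mu = 0 -> False.
Proof.
  intros Hjk Hm Hn Hab H1 H2 H3.
  assert (Ha : a = -b*ei).
  { apply Rmult_eq_reg_r with (ej - ek); [lra|lra]. }
  subst a.
  assert (Hmu : mu = -2*b*ei^2) by lra. subst mu.
  assert (Hb : b*((em-ei)*(en-ei)) = 0) by lra.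
  apply Rmult_integral in Hb. destruct Hb as [Hb|Hb].
  - subst b. destruct Hab; lra.
  - apply Rmult_integral in Hb. destruct Hb; lra.
Qed.
Lemma bad_12_13_14 e1 e2 e3 e4 a b mu x12 x13 x14 :
  e1 < e2 -> e2 < e3 -> e3 < e4 -> (a <> 0 \/ b <> 0) ->
  (2*a*(e3+e4) + 2*b*(e3*e4) - mu) * x12 = 0 -> (2*a*(e2+e4) + 2*b*(e2*e4) - mu) * x13 = 0 -> (2*a*(e2+e3) + 2*b*(e2*e3) - mu) * x14 = 0 -> x12 <> 0 -> x13 <> 0 -> x14 <> 0 -> False.
Proof.
  intros O1 O2 O3 Hab G1 G2 G3 N1 N2 N3.
  apply Rmult_integral in G1; destruct G1 as [G1|G1]; [|contradiction].
  apply Rmult_integral in G2; destruct G2 as [G2|G2]; [|contradiction].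
  apply Rmult_integral in G3; destruct G3 as [G3|G3]; [|contradiction].
  apply (bad_gen e4 e3 e2 e2 e3 a b mu); try lra; exact Hab.
Qed.

Lemma bad_12_13_24 e1 e2 e3 e4 a b mu x12 x13 x24 :
  e1 < e2 -> e2 < e3 -> e3 < e4 -> (a <> 0 \/ b <> 0) ->
  (2*a*(e3+e4) + 2*b*(e3*e4) - mu) * x12 = 0 -> (2*a*(e2+e4) + 2*b*(e2*e4) - mu) * x13 = 0 -> (2*a*(e1+e3) + 2*b*(e1*e3) - mu) * x24 = 0 -> x12 <> 0 -> x13 <> 0 -> x24 <> 0 -> False.
Proof.
  intros O1 O2 O3 Hab G1 G2 G3 N1 N2 N3.
  apply Rmult_integral in G1; destruct G1 as [G1|G1]; [|contradiction].
  apply Rmult_integral in G2; destruct G2 as [G2|G2]; [|contradiction].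
  apply Rmult_integral in G3; destruct G3 as [G3|G3]; [|contradiction].
  apply (bad_gen e4 e3 e2 e1 e3 a b mu); try lra; exact Hab.
Qed.

Lemma bad_12_13_34 e1 e2 e3 e4 a b mu x12 x13 x34 :
  e1 < e2 -> e2 < e3 -> e3 < e4 -> (a <> 0 \/ b <> 0) ->
  (2*a*(e3+e4) + 2*b*(e3*e4) - mu) * x12 = 0 -> (2*a*(e2+e4) + 2*b*(e2*e4) - mu) * x13 = 0 -> (2*a*(e1+e2) + 2*b*(e1*e2) - mu) * x34 = 0 -> x12 <> 0 -> x13 <> 0 -> x34 <> 0 -> False.
Proof.
  intros O1 O2 O3 Hab G1 G2 G3 N1 N2 N3.
  apply Rmult_integral in G1; destruct G1 as [G1|G1]; [|contradiction].
  apply Rmult_integral in G2; destruct G2 as [G2|G2]; [|contradiction].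
  apply Rmult_integral in G3; destruct G3 as [G3|G3]; [|contradiction].
  apply (bad_gen e4 e3 e2 e1 e2 a b mu); try lra; exact Hab.
Qed.

Lemma bad_12_14_23 e1 e2 e3 e4 a b mu x12 x14 x23 :
  e1 < e2 -> e2 < e3 -> e3 < e4 -> (a <> 0 \/ b <> 0) ->
  (2*a*(e3+e4) + 2*b*(e3*e4) - mu) * x12 = 0 -> (2*a*(e2+e3) + 2*b*(e2*e3) - mu) * x14 = 0 -> (2*a*(e1+e4) + 2*b*(e1*e4) - mu) * x23 = 0 -> x12 <> 0 -> x14 <> 0 -> x23 <> 0 -> False.
Proof.
  intros O1 O2 O3 Hab G1 G2 G3 N1 N2 N3.
  apply Rmult_integral in G1; destruct G1 as [G1|G1]; [|contradiction].
  apply Rmult_integral in G2; destruct G2 as [G2|G2]; [|contradiction].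
  apply Rmult_integral in G3; destruct G3 as [G3|G3]; [|contradiction].
  apply (bad_gen e3 e4 e2 e1 e4 a b mu); try lra; exact Hab.
Qed.

Lemma bad_12_14_34 e1 e2 e3 e4 a b mu x12 x14 x34 :
  e1 < e2 -> e2 < e3 -> e3 < e4 -> (a <> 0 \/ b <> 0) ->
  (2*a*(e3+e4) + 2*b*(e3*e4) - mu) * x12 = 0 -> (2*a*(e2+e3) + 2*b*(e2*e3) - mu) * x14 = 0 -> (2*a*(e1+e2) + 2*b*(e1*e2) - mu) * x34 = 0 -> x12 <> 0 -> x14 <> 0 -> x34 <> 0 -> False.
Proof.
  intros O1 O2 O3 Hab G1 G2 G3 N1 N2 N3.
  apply Rmult_integral in G1; destruct G1 as [G1|G1]; [|contradiction].
  apply Rmult_integral in G2; destruct G2 as [G2|G2]; [|contradiction].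
  apply Rmult_integral in G3; destruct G3 as [G3|G3]; [|contradiction].
  apply (bad_gen e3 e4 e2 e1 e2 a b mu); try lra; exact Hab.
Qed.

Lemma bad_12_23_24 e1 e2 e3 e4 a b mu x12 x23 x24 :
  e1 < e2 -> e2 < e3 -> e3 < e4 -> (a <> 0 \/ b <> 0) ->
  (2*a*(e3+e4) + 2*b*(e3*e4) - mu) * x12 = 0 -> (2*a*(e1+e4) + 2*b*(e1*e4) - mu) * x23 = 0 -> (2*a*(e1+e3) + 2*b*(e1*e3) - mu) * x24 = 0 -> x12 <> 0 -> x23 <> 0 -> x24 <> 0 -> False.
Proof.
  intros O1 O2 O3 Hab G1 G2 G3 N1 N2 N3.
  apply Rmult_integral in G1; destruct G1 as [G1|G1]; [|contradiction].
  apply Rmult_integral in G2; destruct G2 as [G2|G2]; [|contradiction].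
  apply Rmult_integral in G3; destruct G3 as [G3|G3]; [|contradiction].
  apply (bad_gen e4 e3 e1 e1 e3 a b mu); try lra; exact Hab.
Qed.

Lemma bad_12_23_34 e1 e2 e3 e4 a b mu x12 x23 x34 :
  e1 < e2 -> e2 < e3 -> e3 < e4 -> (a <> 0 \/ b <> 0) ->
  (2*a*(e3+e4) + 2*b*(e3*e4) - mu) * x12 = 0 -> (2*a*(e1+e4) + 2*b*(e1*e4) - mu) * x23 = 0 -> (2*a*(e1+e2) + 2*b*(e1*e2) - mu) * x34 = 0 -> x12 <> 0 -> x23 <> 0 -> x34 <> 0 -> False.
Proof.
  intros O1 O2 O3 Hab G1 G2 G3 N1 N2 N3.
  apply Rmult_integral in G1; destruct G1 as [G1|G1]; [|contradiction].
  apply Rmult_integral in G2; destruct G2 as [G2|G2]; [|contradiction].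
  apply Rmult_integral in G3; destruct G3 as [G3|G3]; [|contradiction].
  apply (bad_gen e4 e3 e1 e1 e2 a b mu); try lra; exact Hab.
Qed.

Lemma bad_12_24_34 e1 e2 e3 e4 a b mu x12 x24 x34 :
  e1 < e2 -> e2 < e3 -> e3 < e4 -> (a <> 0 \/ b <> 0) ->
  (2*a*(e3+e4) + 2*b*(e3*e4) - mu) * x12 = 0 -> (2*a*(e1+e3) + 2*b*(e1*e3) - mu) * x24 = 0 -> (2*a*(e1+e2) + 2*b*(e1*e2) - mu) * x34 = 0 -> x12 <> 0 -> x24 <> 0 -> x34 <> 0 -> False.
Proof.
  intros O1 O2 O3 Hab G1 G2 G3 N1 N2 N3.
  apply Rmult_integral in G1; destruct G1 as [G1|G1]; [|contradiction].
  apply Rmult_integral in G2; destruct G2 as [G2|G2]; [|contradiction].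
  apply Rmult_integral in G3; destruct G3 as [G3|G3]; [|contradiction].
  apply (bad_gen e3 e4 e1 e1 e2 a b mu); try lra; exact Hab.
Qed.

Lemma bad_13_14_23 e1 e2 e3 e4 a b mu x13 x14 x23 :
  e1 < e2 -> e2 < e3 -> e3 < e4 -> (a <> 0 \/ b <> 0) ->
  (2*a*(e2+e4) + 2*b*(e2*e4) - mu) * x13 = 0 -> (2*a*(e2+e3) + 2*b*(e2*e3) - mu) * x14 = 0 -> (2*a*(e1+e4) + 2*b*(e1*e4) - mu) * x23 = 0 -> x13 <> 0 -> x14 <> 0 -> x23 <> 0 -> False.
Proof.
  intros O1 O2 O3 Hab G1 G2 G3 N1 N2 N3.
  apply Rmult_integral in G1; destruct G1 as [G1|G1]; [|contradiction].
  apply Rmult_integral in G2; destruct G2 as [G2|G2]; [|contradiction].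
  apply Rmult_integral in G3; destruct G3 as [G3|G3]; [|contradiction].
  apply (bad_gen e2 e4 e3 e1 e4 a b mu); try lra; exact Hab.
Qed.

Lemma bad_13_14_24 e1 e2 e3 e4 a b mu x13 x14 x24 :
  e1 < e2 -> e2 < e3 -> e3 < e4 -> (a <> 0 \/ b <> 0) ->
  (2*a*(e2+e4) + 2*b*(e2*e4) - mu) * x13 = 0 -> (2*a*(e2+e3) + 2*b*(e2*e3) - mu) * x14 = 0 -> (2*a*(e1+e3) + 2*b*(e1*e3) - mu) * x24 = 0 -> x13 <> 0 -> x14 <> 0 -> x24 <> 0 -> False.
Proof.
  intros O1 O2 O3 Hab G1 G2 G3 N1 N2 N3.
  apply Rmult_integral in G1; destruct G1 as [G1|G1]; [|contradiction].
  apply Rmult_integral in G2; destruct G2 as [G2|G2]; [|contradiction].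
  apply Rmult_integral in G3; destruct G3 as [G3|G3]; [|contradiction].
  apply (bad_gen e2 e4 e3 e1 e3 a b mu); try lra; exact Hab.
Qed.

Lemma bad_13_23_24 e1 e2 e3 e4 a b mu x13 x23 x24 :
  e1 < e2 -> e2 < e3 -> e3 < e4 -> (a <> 0 \/ b <> 0) ->
  (2*a*(e2+e4) + 2*b*(e2*e4) - mu) * x13 = 0 -> (2*a*(e1+e4) + 2*b*(e1*e4) - mu) * x23 = 0 -> (2*a*(e1+e3) + 2*b*(e1*e3) - mu) * x24 = 0 -> x13 <> 0 -> x23 <> 0 -> x24 <> 0 -> False.
Proof.
  intros O1 O2 O3 Hab G1 G2 G3 N1 N2 N3.
  apply Rmult_integral in G1; destruct G1 as [G1|G1]; [|contradiction].
  apply Rmult_integral in G2; destruct G2 as [G2|G2]; [|contradiction].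
  apply Rmult_integral in G3; destruct G3 as [G3|G3]; [|contradiction].
  apply (bad_gen e4 e2 e1 e1 e3 a b mu); try lra; exact Hab.
Qed.

Lemma bad_13_23_34 e1 e2 e3 e4 a b mu x13 x23 x34 :
  e1 < e2 -> e2 < e3 -> e3 < e4 -> (a <> 0 \/ b <> 0) ->
  (2*a*(e2+e4) + 2*b*(e2*e4) - mu) * x13 = 0 -> (2*a*(e1+e4) + 2*b*(e1*e4) - mu) * x23 = 0 -> (2*a*(e1+e2) + 2*b*(e1*e2) - mu) * x34 = 0 -> x13 <> 0 -> x23 <> 0 -> x34 <> 0 -> False.
Proof.
  intros O1 O2 O3 Hab G1 G2 G3 N1 N2 N3.
  apply Rmult_integral in G1; destruct G1 as [G1|G1]; [|contradiction].
  apply Rmult_integral in G2; destruct G2 as [G2|G2]; [|contradiction].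
  apply Rmult_integral in G3; destruct G3 as [G3|G3]; [|contradiction].
  apply (bad_gen e4 e2 e1 e1 e2 a b mu); try lra; exact Hab.
Qed.

Lemma bad_13_24_34 e1 e2 e3 e4 a b mu x13 x24 x34 :
  e1 < e2 -> e2 < e3 -> e3 < e4 -> (a <> 0 \/ b <> 0) ->
  (2*a*(e2+e4) + 2*b*(e2*e4) - mu) * x13 = 0 -> (2*a*(e1+e3) + 2*b*(e1*e3) - mu) * x24 = 0 -> (2*a*(e1+e2) + 2*b*(e1*e2) - mu) * x34 = 0 -> x13 <> 0 -> x24 <> 0 -> x34 <> 0 -> False.
Proof.
  intros O1 O2 O3 Hab G1 G2 G3 N1 N2 N3.
  apply Rmult_integral in G1; destruct G1 as [G1|G1]; [|contradiction].
  apply Rmult_integral in G2; destruct G2 as [G2|G2]; [|contradiction].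
  apply Rmult_integral in G3; destruct G3 as [G3|G3]; [|contradiction].
  apply (bad_gen e2 e4 e1 e1 e3 a b mu); try lra; exact Hab.
Qed.

Lemma bad_14_23_24 e1 e2 e3 e4 a b mu x14 x23 x24 :
  e1 < e2 -> e2 < e3 -> e3 < e4 -> (a <> 0 \/ b <> 0) ->
  (2*a*(e2+e3) + 2*b*(e2*e3) - mu) * x14 = 0 -> (2*a*(e1+e4) + 2*b*(e1*e4) - mu) * x23 = 0 -> (2*a*(e1+e3) + 2*b*(e1*e3) - mu) * x24 = 0 -> x14 <> 0 -> x23 <> 0 -> x24 <> 0 -> False.
Proof.
  intros O1 O2 O3 Hab G1 G2 G3 N1 N2 N3.
  apply Rmult_integral in G1; destruct G1 as [G1|G1]; [|contradiction].
  apply Rmult_integral in G2; destruct G2 as [G2|G2]; [|contradiction].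
  apply Rmult_integral in G3; destruct G3 as [G3|G3]; [|contradiction].
  apply (bad_gen e3 e2 e1 e1 e4 a b mu); try lra; exact Hab.
Qed.

Lemma bad_14_23_34 e1 e2 e3 e4 a b mu x14 x23 x34 :
  e1 < e2 -> e2 < e3 -> e3 < e4 -> (a <> 0 \/ b <> 0) ->
  (2*a*(e2+e3) + 2*b*(e2*e3) - mu) * x14 = 0 -> (2*a*(e1+e4) + 2*b*(e1*e4) - mu) * x23 = 0 -> (2*a*(e1+e2) + 2*b*(e1*e2) - mu) * x34 = 0 -> x14 <> 0 -> x23 <> 0 -> x34 <> 0 -> False.
Proof.
  intros O1 O2 O3 Hab G1 G2 G3 N1 N2 N3.
  apply Rmult_integral in G1; destruct G1 as [G1|G1]; [|contradiction].
  apply Rmult_integral in G2; destruct G2 as [G2|G2]; [|contradiction].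
  apply Rmult_integral in G3; destruct G3 as [G3|G3]; [|contradiction].
  apply (bad_gen e2 e3 e1 e1 e4 a b mu); try lra; exact Hab.
Qed.

Lemma bad_14_24_34 e1 e2 e3 e4 a b mu x14 x24 x34 :
  e1 < e2 -> e2 < e3 -> e3 < e4 -> (a <> 0 \/ b <> 0) ->
  (2*a*(e2+e3) + 2*b*(e2*e3) - mu) * x14 = 0 -> (2*a*(e1+e3) + 2*b*(e1*e3) - mu) * x24 = 0 -> (2*a*(e1+e2) + 2*b*(e1*e2) - mu) * x34 = 0 -> x14 <> 0 -> x24 <> 0 -> x34 <> 0 -> False.
Proof.
  intros O1 O2 O3 Hab G1 G2 G3 N1 N2 N3.
  apply Rmult_integral in G1; destruct G1 as [G1|G1]; [|contradiction].
  apply Rmult_integral in G2; destruct G2 as [G2|G2]; [|contradiction].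
  apply Rmult_integral in G3; destruct G3 as [G3|G3]; [|contradiction].
  apply (bad_gen e3 e2 e1 e1 e2 a b mu); try lra; exact Hab.
Qed.


Section S.
Variables e1 e2 e3 e4 x12 x13 x14 x23 x24 x34 : R.
Let L := mkL6 x12 x13 x14 x23 x24 x34.
Let p := (eta1 e1 e2 e3 e4 L, eta2 e1 e2 e3 e4 L).
Let C1 := x12^2 + x13^2 + x14^2 + x23^2 + x24^2 + x34^2 = 1.

Lemma online1 : x12 = 0 -> x13 = 0 -> x14 = 0 -> C1 -> on_line e1 p.
Proof. unfold C1, p, L, on_line, eta1, eta2. intros -> -> -> H; prj.
  assert (E : x23^2 = 1 - x24^2 - x34^2) by lra. rewrite E. ring. Qed.
Lemma online2 : x12 = 0 -> x23 = 0 -> x24 = 0 -> C1 -> on_line e2 p.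
Proof. unfold C1, p, L, on_line, eta1, eta2. intros -> -> -> H; prj.
  assert (E : x13^2 = 1 - x14^2 - x34^2) by lra. rewrite E. ring. Qed.
Lemma online3 : x13 = 0 -> x23 = 0 -> x34 = 0 -> C1 -> on_line e3 p.
Proof. unfold C1, p, L, on_line, eta1, eta2. intros -> -> -> H; prj.
  assert (E : x12^2 = 1 - x14^2 - x24^2) by lra. rewrite E. ring. Qed.
Lemma online4 : x14 = 0 -> x24 = 0 -> x34 = 0 -> C1 -> on_line e4 p.
Proof. unfold C1, p, L, on_line, eta1, eta2. intros -> -> -> H; prj.
  assert (E : x12^2 = 1 - x13^2 - x23^2) by lra. rewrite E. ring. Qed.

Lemma allzero : C1 -> x12 = 0 -> x13 = 0 -> x14 = 0 -> x23 = 0 -> x24 = 0 -> x34 = 0 -> False.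
Proof. unfold C1. intros H -> -> -> -> -> ->. lra. Qed.

Let C2 := x12*x34 - x13*x24 + x14*x23 = 0.
Lemma dual12 : C2 -> x12 <> 0 -> x34 <> 0 -> x13 = 0 -> x14 = 0 -> False.
Proof. unfold C2. intros H A B -> ->. apply (Rmult_integral_contrapositive_currified _ _ A B). lra. Qed.
Lemma dual13 : C2 -> x13 <> 0 -> x24 <> 0 -> x12 = 0 -> x14 = 0 -> False.
Proof. unfold C2. intros H A B -> ->. apply (Rmult_integral_contrapositive_currified _ _ A B). lra. Qed.
Lemma dual14 : C2 -> x14 <> 0 -> x23 <> 0 -> x12 = 0 -> x13 = 0 -> False.
Proof. unfold C2. intros H A B -> ->. apply (Rmult_integral_contrapositive_currified _ _ A B). lra. Qed.
End S.

Lemma core0 e1 e2 e3 e4 x12 x13 x14 x23 x24 x34 a b mu :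
  e1 < e2 -> e2 < e3 -> e3 < e4 ->
  x12^2 + x13^2 + x14^2 + x23^2 + x24^2 + x34^2 = 1 ->
  x12*x34 - x13*x24 + x14*x23 = 0 ->
  (a <> 0 \/ b <> 0) ->
  (2*a*(e3+e4) + 2*b*(e3*e4) - mu) * x12 = 0 ->
  (2*a*(e2+e4) + 2*b*(e2*e4) - mu) * x13 = 0 ->
  (2*a*(e2+e3) + 2*b*(e2*e3) - mu) * x14 = 0 ->
  (2*a*(e1+e4) + 2*b*(e1*e4) - mu) * x23 = 0 ->
  (2*a*(e1+e3) + 2*b*(e1*e3) - mu) * x24 = 0 ->
  (2*a*(e1+e2) + 2*b*(e1*e2) - mu) * x34 = 0 ->
  let p := (eta1 e1 e2 e3 e4 (mkL6 x12 x13 x14 x23 x24 x34),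
            eta2 e1 e2 e3 e4 (mkL6 x12 x13 x14 x23 x24 x34)) in
  on_line e1 p \/ on_line e2 p \/ on_line e3 p \/ on_line e4 p \/ on_C e2 e3 p.
Proof.
  intros O1 O2 O3 HC1 HC2 Hab G12 G13 G14 G23 G24 G34 p. unfold p.
  destruct (Req_dec x12 0); destruct (Req_dec x13 0); destruct (Req_dec x14 0);
  destruct (Req_dec x23 0); destruct (Req_dec x24 0); destruct (Req_dec x34 0);
  first [ left; eapply online1; eassumption
  | right; left; eapply online2; eassumption
  | right; right; left; eapply online3; eassumption
  | right; right; right; left; eapply online4; eassumption
  | exfalso; first [ eapply (allzero e1 e2 e3 e4); eassumption
    | eapply (dual12 e1 e2 e3 e4); eassumption | eapply (dual13 e1 e2 e3 e4); eassumption | eapply (dual14 e1 e2 e3 e4); eassumption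
    | eapply (bad_12_13_14 e1 e2 e3 e4 a b mu); eassumption
    | eapply (bad_12_13_24 e1 e2 e3 e4 a b mu); eassumption
    | eapply (bad_12_13_34 e1 e2 e3 e4 a b mu); eassumption
    | eapply (bad_12_14_23 e1 e2 e3 e4 a b mu); eassumption
    | eapply (bad_12_14_34 e1 e2 e3 e4 a b mu); eassumption
    | eapply (bad_12_23_24 e1 e2 e3 e4 a b mu); eassumption
    | eapply (bad_12_23_34 e1 e2 e3 e4 a b mu); eassumption
    | eapply (bad_12_24_34 e1 e2 e3 e4 a b mu); eassumption
    | eapply (bad_13_14_23 e1 e2 e3 e4 a b mu); eassumption
    | eapply (bad_13_14_24 e1 e2 e3 e4 a b mu); eassumption
    | eapply (bad_13_23_24 e1 e2 e3 e4 a b mu); eassumption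
    | eapply (bad_13_23_34 e1 e2 e3 e4 a b mu); eassumption
    | eapply (bad_13_24_34 e1 e2 e3 e4 a b mu); eassumption
    | eapply (bad_14_23_24 e1 e2 e3 e4 a b mu); eassumption
    | eapply (bad_14_23_34 e1 e2 e3 e4 a b mu); eassumption
    | eapply (bad_14_24_34 e1 e2 e3 e4 a b mu); eassumption ] ].
Qed.


Lemma sq0 x : x^2 = 0 -> x = 0.
Proof. intro H. destruct (Req_dec x 0) as [?|Hn]; [auto|]. exfalso; exact (pow_nonzero x 2 Hn H). Qed.

Lemma mpp x y : 0 < x -> 0 < y -> 0 < x*y.
Proof. intros; apply Rmult_lt_0_compat; auto. Qed.
Lemma mnn x y : x < 0 -> y < 0 -> 0 < x*y.
Proof. intros; replace (x*y) with ((-x)*(-y)) by ring; apply Rmult_lt_0_compat; lra. Qed.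
Lemma mpn x y : 0 < x -> y < 0 -> x*y < 0.
Proof. intros; replace (x*y) with (-(x*(-y))) by ring.
  assert (0 < x*(-y)) by (apply Rmult_lt_0_compat; lra). lra. Qed.
Lemma mple x y : 0 < x -> y <= 0 -> x*y <= 0.
Proof. intros; replace (x*y) with (-(x*(-y))) by ring.
  assert (0 <= x*(-y)) by (apply Rmult_le_pos; lra). lra. Qed.

Lemma nz2 b : b <> 0 -> 2*b <> 0.
Proof. intro; apply Rmult_integral_contrapositive_currified; [lra|auto]. Qed.

Lemma pos3 A B C u v w : 0 < A -> 0 < B -> 0 < C ->
  A*u^2 + B*v^2 + C*w^2 = 0 -> u = 0 /\ v = 0 /\ w = 0.
Proof.
  intros HA HB HC H.
  assert (Hu : 0 <= A*u^2) by (apply Rmult_le_pos; [lra|apply pow2_ge_0]).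
  assert (Hv : 0 <= B*v^2) by (apply Rmult_le_pos; [lra|apply pow2_ge_0]).
  assert (Hw : 0 <= C*w^2) by (apply Rmult_le_pos; [lra|apply pow2_ge_0]).
  assert (H1 : A*u^2 = 0) by lra. assert (H2 : B*v^2 = 0) by lra.
  assert (H3 : C*w^2 = 0) by lra.
  apply Rmult_integral in H1; apply Rmult_integral in H2; apply Rmult_integral in H3.
  destruct H1 as [H1|H1]; [lra|]; destruct H2 as [H2|H2]; [lra|];
  destruct H3 as [H3|H3]; [lra|].
  repeat split; apply sq0; assumption.
Qed.

Lemma nz_eq (k x : R) : k <> 0 -> k * x = 0 -> x = 0.
Proof. intros Hk H. apply Rmult_integral in H. destruct H; [contradiction|assumption]. Qed.

Lemma sg_lo e1 e2 e3 e4 t : e1 < e2 -> e2 < e3 -> e3 < e4 -> t < e2 ->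
  0 < (e3-t)*(e4-t) /\ 0 < (e2-t)*(e4-t) /\ 0 < (e2-t)*(e3-t).
Proof. intros. repeat split; apply mpp; lra. Qed.
Lemma sg_hi e1 e2 e3 e4 t : e1 < e2 -> e2 < e3 -> e3 < e4 -> e4 < t ->
  0 < (e3-t)*(e4-t) /\ 0 < (e2-t)*(e4-t) /\ 0 < (e2-t)*(e3-t).
Proof. intros. repeat split; apply mnn; lra. Qed.
Lemma sg_mid e1 e2 e3 e4 t : e1 < e2 -> e2 < e3 -> e3 < e4 -> e3 < t -> t < e4 ->
  (e1-t)*(e2-t)*(e3-t)*(e4-t) < 0.
Proof. intros. replace ((e1-t)*(e2-t)*(e3-t)*(e4-t)) with (((e1-t)*(e2-t))*((e4-t)*(e3-t))) by ring.
  apply mpn; [apply mnn|apply mpn]; lra. Qed.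
Lemma Ppos nu bb P : 0 < nu^2 -> 0 < bb -> nu^2 = 4*bb*P -> 0 < P.
Proof. intros H1 H2 H3. destruct (Rle_or_lt P 0) as [Hle|]; [|auto].
  assert (bb*P <= 0) by (apply mple; auto). lra. Qed.

Lemma core1_c e1 e2 e3 e4 x12 x13 x14 g12 g13 g14 g23 g24 g34 nu c :
  e1 < e2 -> e2 < e3 -> e3 < e4 -> 0 < nu^2 ->
  (x12 <> 0 \/ x13 <> 0 \/ x14 <> 0) ->
  (x12 <> 0 -> g12*g34 = nu^2) -> (x13 <> 0 -> g13*g24 = nu^2) -> (x14 <> 0 -> g14*g23 = nu^2) ->
  g12*x12^2 + g13*x13^2 + g14*x14^2 = 0 ->
  g12*g34 - g13*g24 = -2*c*((e1-e4)*(e2-e3)) ->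
  g12*g34 - g14*g23 = -2*c*((e1-e3)*(e2-e4)) ->
  g13*g24 - g14*g23 = -2*c*((e1-e2)*(e3-e4)) -> c = 0.
Proof.
  intros O1 O2 O3 Hnu2 Hnz P12 P13 P14 K I1 I2 I3.
  destruct (Req_dec x12 0) as [A|A]; destruct (Req_dec x13 0) as [B|B];
    destruct (Req_dec x14 0) as [C|C].
    - exfalso; destruct Hnz as [?|[?|?]]; contradiction.
    - exfalso. rewrite A, B in K. assert (g14 = 0).
      { apply (nz_eq (x14^2)); [apply pow_nonzero; auto| lra]. }
      specialize (P14 C). rewrite H in P14. lra.
    - exfalso. rewrite A, C in K. assert (g13 = 0).
      { apply (nz_eq (x13^2)); [apply pow_nonzero; auto| lra]. }
      specialize (P13 B). rewrite H in P13. lra.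
    - specialize (P13 B); specialize (P14 C).
      assert (Q : -2*c*((e1-e2)*(e3-e4)) = 0) by lra.
      apply Rmult_integral in Q; destruct Q as [Q|Q]; [lra|].
      apply Rmult_integral in Q; destruct Q; lra.
    - exfalso. rewrite B, C in K. assert (g12 = 0).
      { apply (nz_eq (x12^2)); [apply pow_nonzero; auto| lra]. }
      specialize (P12 A). rewrite H in P12. lra.
    - specialize (P12 A); specialize (P14 C).
      assert (Q : -2*c*((e1-e3)*(e2-e4)) = 0) by lra.
      apply Rmult_integral in Q; destruct Q as [Q|Q]; [lra|].
      apply Rmult_integral in Q; destruct Q; lra.
    - specialize (P12 A); specialize (P13 B).
      assert (Q : -2*c*((e1-e4)*(e2-e3)) = 0) by lra.
      apply Rmult_integral in Q; destruct Q as [Q|Q]; [lra|].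
      apply Rmult_integral in Q; destruct Q; lra.
    - specialize (P12 A); specialize (P13 B).
      assert (Q : -2*c*((e1-e4)*(e2-e3)) = 0) by lra.
      apply Rmult_integral in Q; destruct Q as [Q|Q]; [lra|].
      apply Rmult_integral in Q; destruct Q; lra.
Qed.

Lemma core1_fin e1 e2 e3 e4 x12 x13 x14 x23 x24 x34 b t nu g12 g13 g14 g23 g24 g34 :
  e1 < e2 -> e2 < e3 -> e3 < e4 ->
  x12^2 + x13^2 + x14^2 + x23^2 + x24^2 + x34^2 = 1 ->
  b <> 0 -> 0 < b*b -> 0 < nu^2 ->
  (x12 <> 0 \/ x13 <> 0 \/ x14 <> 0) ->
  (x12 <> 0 -> g12*g34 = nu^2) -> (x13 <> 0 -> g13*g24 = nu^2) -> (x14 <> 0 -> g14*g23 = nu^2) ->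
  g12*x12^2 + g13*x13^2 + g14*x14^2 = 0 ->
  g12*x12 = nu*x34 -> g13*x13 = -nu*x24 -> g14*x14 = nu*x23 ->
  g23*x23 = nu*x14 -> g24*x24 = -nu*x13 -> g34*x34 = nu*x12 ->
  g12 = 2*b*((e3-t)*(e4-t)) -> g13 = 2*b*((e2-t)*(e4-t)) -> g14 = 2*b*((e2-t)*(e3-t)) ->
  g23 = 2*b*((e1-t)*(e4-t)) -> g24 = 2*b*((e1-t)*(e3-t)) -> g34 = 2*b*((e1-t)*(e2-t)) ->
  on_C e2 e3 (eta1 e1 e2 e3 e4 (mkL6 x12 x13 x14 x23 x24 x34),
              eta2 e1 e2 e3 e4 (mkL6 x12 x13 x14 x23 x24 x34)).
Proof.
  intros O1 O2 O3 HC1 Hb Hbb Hnu2 Hnz P12 P13 P14 K E12 E13 E14 E23 E24 E34 H12 H13 H14 H23 H24 H34.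
  set (P := (e1-t)*(e2-t)*(e3-t)*(e4-t)).
  assert (HP : nu^2 = 4*(b*b)*P).
  { destruct Hnz as [A|[A|A]].
    - rewrite <- (P12 A), H12, H34; unfold P; ring.
    - rewrite <- (P13 A), H13, H24; unfold P; ring.
    - rewrite <- (P14 A), H14, H23; unfold P; ring. }
  assert (HPpos : 0 < P).
  { apply (Ppos nu (b*b) P); auto. }
  assert (Kb : ((e3-t)*(e4-t)*x12^2 + (e2-t)*(e4-t)*x13^2 + (e2-t)*(e3-t)*x14^2) = 0).
  { apply (nz_eq (2*b)); [apply nz2; auto|]. rewrite H12, H13, H14 in K.
    etransitivity; [|exact K]; ring. }
  assert (R12 : ((e1-t)*(e2-t)*x34^2 - (e3-t)*(e4-t)*x12^2) = 0).
  { assert (Q : g34*x34^2 - g12*x12^2 = 0).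
    { transitivity (x34*(g34*x34) - x12*(g12*x12)); [ring|]. rewrite E12, E34; ring. }
    rewrite H12, H34 in Q. apply (nz_eq (2*b)); [apply nz2; auto|]. etransitivity; [|exact Q]; ring. }
  assert (R13 : ((e1-t)*(e3-t)*x24^2 - (e2-t)*(e4-t)*x13^2) = 0).
  { assert (Q : g24*x24^2 - g13*x13^2 = 0).
    { transitivity (x24*(g24*x24) - x13*(g13*x13)); [ring|]. rewrite E13, E24; ring. }
    rewrite H13, H24 in Q. apply (nz_eq (2*b)); [apply nz2; auto|]. etransitivity; [|exact Q]; ring. }
  assert (R14 : ((e1-t)*(e4-t)*x23^2 - (e2-t)*(e3-t)*x14^2) = 0).
  { assert (Q : g23*x23^2 - g14*x14^2 = 0).
    { transitivity (x23*(g23*x23) - x14*(g14*x14)); [ring|]. rewrite E14, E23; ring. }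
    rewrite H14, H23 in Q. apply (nz_eq (2*b)); [apply nz2; auto|]. etransitivity; [|exact Q]; ring. }
  assert (Hnz0 : ~ (x12 = 0 /\ x13 = 0 /\ x14 = 0)).
  { intros [A [B C]]. destruct Hnz as [?|[?|?]]; contradiction. }
  assert (Ht2 : e2 <= t).
  { destruct (Rle_or_lt e2 t) as [?|Hlt]; [auto|]. exfalso. apply Hnz0.
    destruct (sg_lo e1 e2 e3 e4 t O1 O2 O3 Hlt) as [A [B C]].
    exact (pos3 _ _ _ _ _ _ A B C Kb). }
  assert (Ht3 : t <= e3).
  { destruct (Rle_or_lt t e3) as [?|Hlt]; [auto|]. exfalso.
    destruct (Rlt_or_le t e4) as [Ht4|Ht4].
    - pose proof (sg_mid e1 e2 e3 e4 t O1 O2 O3 Hlt Ht4) as M. fold P in M.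
      exact (Rlt_asym _ _ M HPpos).
    - destruct (Req_dec t e4) as [Heq|Hne].
      + assert (HP0 : P = 0) by (unfold P; rewrite Heq; ring).
        rewrite HP0 in HPpos. exact (Rlt_irrefl 0 HPpos).
      + assert (Ht4' : e4 < t) by (destruct Ht4 as [?|Heq]; [auto|exfalso; apply Hne; auto]).
        apply Hnz0.
        destruct (sg_hi e1 e2 e3 e4 t O1 O2 O3 Ht4') as [A [B C]].
        exact (pos3 _ _ _ _ _ _ A B C Kb). }
  assert (Ee1 : eta1 e1 e2 e3 e4 (mkL6 x12 x13 x14 x23 x24 x34) = 2*t).
  { apply (Rmult_eq_reg_l P); [|exact (Rgt_not_eq P 0 HPpos)].
    assert (Id : P*(2*t) - P*eta1 e1 e2 e3 e4 (mkL6 x12 x13 x14 x23 x24 x34) = (((t-e3)+(t-e4))*((e1-t)*(e2-t)) + ((e3-t)*(e4-t))*((t-e1)+(t-e2)))*((e3-t)*(e4-t)*x12^2 + (e2-t)*(e4-t)*x13^2 + (e2-t)*(e3-t)*x14^2)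
       + ((e3-t)*(e4-t))*((t-e1)+(t-e2))*((e1-t)*(e2-t)*x34^2 - (e3-t)*(e4-t)*x12^2)
       + ((e2-t)*(e4-t))*((t-e1)+(t-e3))*((e1-t)*(e3-t)*x24^2 - (e2-t)*(e4-t)*x13^2)
       + ((e2-t)*(e3-t))*((t-e1)+(t-e4))*((e1-t)*(e4-t)*x23^2 - (e2-t)*(e3-t)*x14^2)
       + 2*t*P*(1 - (x12^2 + x13^2 + x14^2 + x23^2 + x24^2 + x34^2))) by (unfold P, eta1; prj; ring).
    rewrite Kb, R12, R13, R14, HC1 in Id. apply Rminus_diag_uniq_sym. rewrite Id; ring. }
  assert (Ee2 : eta2 e1 e2 e3 e4 (mkL6 x12 x13 x14 x23 x24 x34) = t^2).
  { assert (Id : eta2 e1 e2 e3 e4 (mkL6 x12 x13 x14 x23 x24 x34) - t^2 = t*(eta1 e1 e2 e3 e4 (mkL6 x12 x13 x14 x23 x24 x34) - 2*t)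
       - t^2*((x12^2 + x13^2 + x14^2 + x23^2 + x24^2 + x34^2) - 1) + 2*((e3-t)*(e4-t)*x12^2 + (e2-t)*(e4-t)*x13^2 + (e2-t)*(e3-t)*x14^2) + ((e1-t)*(e2-t)*x34^2 - (e3-t)*(e4-t)*x12^2) + ((e1-t)*(e3-t)*x24^2 - (e2-t)*(e4-t)*x13^2) + ((e1-t)*(e4-t)*x23^2 - (e2-t)*(e3-t)*x14^2))
       by (unfold eta1, eta2; prj; ring).
    rewrite Ee1, Kb, R12, R13, R14, HC1 in Id. apply Rminus_diag_uniq. rewrite Id; ring. }
  exists t. split; [split; assumption|]. rewrite Ee1, Ee2. reflexivity.
Qed.

Lemma core1 e1 e2 e3 e4 x12 x13 x14 x23 x24 x34 a b mu nu g12 g13 g14 g23 g24 g34 :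
  e1 < e2 -> e2 < e3 -> e3 < e4 ->
  x12^2 + x13^2 + x14^2 + x23^2 + x24^2 + x34^2 = 1 ->
  x12*x34 - x13*x24 + x14*x23 = 0 ->
  (a <> 0 \/ b <> 0) -> nu <> 0 ->
  g12 = 2*a*(e3+e4) + 2*b*(e3*e4) - mu ->
  g13 = 2*a*(e2+e4) + 2*b*(e2*e4) - mu ->
  g14 = 2*a*(e2+e3) + 2*b*(e2*e3) - mu ->
  g23 = 2*a*(e1+e4) + 2*b*(e1*e4) - mu ->
  g24 = 2*a*(e1+e3) + 2*b*(e1*e3) - mu ->
  g34 = 2*a*(e1+e2) + 2*b*(e1*e2) - mu ->
  g12*x12 = nu*x34 -> g13*x13 = -nu*x24 -> g14*x14 = nu*x23 ->
  g23*x23 = nu*x14 -> g24*x24 = -nu*x13 -> g34*x34 = nu*x12 ->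
  on_C e2 e3 (eta1 e1 e2 e3 e4 (mkL6 x12 x13 x14 x23 x24 x34),
              eta2 e1 e2 e3 e4 (mkL6 x12 x13 x14 x23 x24 x34)).
Proof.
  intros O1 O2 O3 HC1 HC2 Hab Hnu Hg12 Hg13 Hg14 Hg23 Hg24 Hg34 E12 E13 E14 E23 E24 E34.
  assert (Z12 : x12 = 0 -> x34 = 0).
  { intro H. apply (nz_eq nu); [auto|]. rewrite <- E12, H; ring. }
  assert (Z13 : x13 = 0 -> x24 = 0).
  { intro H. apply (nz_eq nu); [auto|]. replace (nu*x24) with (-(-nu*x24)) by ring.
    rewrite <- E13, H; ring. }
  assert (Z14 : x14 = 0 -> x23 = 0).
  { intro H. apply (nz_eq nu); [auto|]. rewrite <- E14, H; ring. }
  assert (P12 : x12 <> 0 -> g12*g34 = nu^2).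
  { intro H. assert (Q : (g12*g34 - nu^2)*x12 = 0).
    { replace ((g12*g34 - nu^2)*x12) with (g34*(g12*x12) - nu*nu*x12) by ring.
      rewrite E12. replace (g34*(nu*x34)) with (nu*(g34*x34)) by ring. rewrite E34. ring. }
    apply Rmult_integral in Q. destruct Q; [lra|contradiction]. }
  assert (P13 : x13 <> 0 -> g13*g24 = nu^2).
  { intro H. assert (Q : (g13*g24 - nu^2)*x13 = 0).
    { replace ((g13*g24 - nu^2)*x13) with (g24*(g13*x13) - nu*nu*x13) by ring.
      rewrite E13. replace (g24*(-nu*x24)) with (-nu*(g24*x24)) by ring. rewrite E24. ring. }
    apply Rmult_integral in Q. destruct Q; [lra|contradiction]. }
  assert (P14 : x14 <> 0 -> g14*g23 = nu^2).
  { intro H. assert (Q : (g14*g23 - nu^2)*x14 = 0).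
    { replace ((g14*g23 - nu^2)*x14) with (g23*(g14*x14) - nu*nu*x14) by ring.
      rewrite E14. replace (g23*(nu*x23)) with (nu*(g23*x23)) by ring. rewrite E23. ring. }
    apply Rmult_integral in Q. destruct Q; [lra|contradiction]. }
  assert (K : g12*x12^2 + g13*x13^2 + g14*x14^2 = 0).
  { transitivity (x12*(g12*x12) + x13*(g13*x13) + x14*(g14*x14)); [ring|].
    rewrite E12, E13, E14.
    transitivity (nu*(x12*x34 - x13*x24 + x14*x23)); [ring|]. rewrite HC2; ring. }
  assert (Hnu2 : 0 < nu^2).
  { replace (nu^2) with (Rsqr nu) by (unfold Rsqr; ring). apply Rsqr_pos_lt; auto. }
  assert (Hnz : x12 <> 0 \/ x13 <> 0 \/ x14 <> 0).
  { destruct (Req_dec x12 0) as [A|A]; [|left; auto].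
    destruct (Req_dec x13 0) as [B|B]; [|right; left; auto].
    destruct (Req_dec x14 0) as [C|C]; [|right; right; auto].
    exfalso. pose proof (Z12 A); pose proof (Z13 B); pose proof (Z14 C).
    subst. lra. }
  set (c := b*mu + 2*a^2).
  assert (I1 : g12*g34 - g13*g24 = -2*c*((e1-e4)*(e2-e3)))
    by (rewrite Hg12, Hg13, Hg24, Hg34; unfold c; ring).
  assert (I2 : g12*g34 - g14*g23 = -2*c*((e1-e3)*(e2-e4)))
    by (rewrite Hg12, Hg14, Hg23, Hg34; unfold c; ring).
  assert (I3 : g13*g24 - g14*g23 = -2*c*((e1-e2)*(e3-e4)))
    by (rewrite Hg13, Hg24, Hg14, Hg23; unfold c; ring).
  assert (Hc : c = 0) by (apply (core1_c e1 e2 e3 e4 x12 x13 x14 g12 g13 g14 g23 g24 g34 nu c); auto).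
  clear I1 I2 I3.
  assert (Hb : b <> 0).
  { intro Hb0. unfold c in Hc. rewrite Hb0 in Hc.
    assert (a = 0).
    { destruct (Req_dec a 0) as [?|Ha]; [auto|]. exfalso.
      apply (pow_nonzero a 2 Ha).
      transitivity ((0*mu + 2*a^2)/2); [field| rewrite Hc; field]. }
    destruct Hab; contradiction. }
  assert (Hbb : 0 < b*b) by (apply Rsqr_pos_lt; auto).
  assert (Hex : exists t, a = -b*t) by (exists (-a/b); field; auto).
  destruct Hex as [t Ha].
  assert (Hmu : mu = -2*b*t^2).
  { assert (Q : b*(mu + 2*b*t^2) = 0) by (unfold c in Hc; rewrite Ha in Hc;
       transitivity (b*mu + 2*(-b*t)^2); [ring|exact Hc]).
    apply (nz_eq b) in Q; [|auto]. apply (Rplus_eq_reg_r (2*b*t^2)). rewrite Q; ring. }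
  apply (core1_fin e1 e2 e3 e4 x12 x13 x14 x23 x24 x34 b t nu g12 g13 g14 g23 g24 g34); auto.
  - rewrite Hg12, Ha, Hmu; ring.
  - rewrite Hg13, Ha, Hmu; ring.
  - rewrite Hg14, Ha, Hmu; ring.
  - rewrite Hg23, Ha, Hmu; ring.
  - rewrite Hg24, Ha, Hmu; ring.
  - rewrite Hg34, Ha, Hmu; ring.
Qed.


Definition dotL (L V : L6) : R :=
  l12 L*l12 V + l13 L*l13 V + l14 L*l14 V + l23 L*l23 V + l24 L*l24 V + l34 L*l34 V.
Definition star (L : L6) : L6 :=
  mkL6 (l34 L) (-(l24 L)) (l23 L) (l14 L) (-(l13 L)) (l12 L).
Definition proj (L V : L6) : L6 :=
  let s := dotL L V in let r := dotL (star L) V in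
  mkL6 (l12 V - s*l12 L - r*l12 (star L)) (l13 V - s*l13 L - r*l13 (star L))
       (l14 V - s*l14 L - r*l14 (star L)) (l23 V - s*l23 L - r*l23 (star L))
       (l24 V - s*l24 L - r*l24 (star L)) (l34 V - s*l34 L - r*l34 (star L)).

Lemma tangent_proj x12 x13 x14 x23 x24 x34 V :
  x12^2 + x13^2 + x14^2 + x23^2 + x24^2 + x34^2 = 1 ->
  x12*x34 - x13*x24 + x14*x23 = 0 ->
  tangent_Mh (mkL6 x12 x13 x14 x23 x24 x34) (proj (mkL6 x12 x13 x14 x23 x24 x34) V).
Proof.
  intros H1 H2. destruct V as [v12 v13 v14 v23 v24 v34].
  unfold tangent_Mh. rewrite dd_Cas1, dd_Cas2. unfold proj, star, dotL; prj. split.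
  - transitivity (2*((x12*v12 + x13*v13 + x14*v14 + x23*v23 + x24*v24 + x34*v34)
        *(1 - (x12^2 + x13^2 + x14^2 + x23^2 + x24^2 + x34^2))
        - 2*(x34*v12 - x24*v13 + x23*v14 + x14*v23 - x13*v24 + x12*v34)
          *(x12*x34 - x13*x24 + x14*x23))); [ring|rewrite H1, H2; ring].
  - transitivity ((x34*v12 - x24*v13 + x23*v14 + x14*v23 - x13*v24 + x12*v34)
        *(1 - (x12^2 + x13^2 + x14^2 + x23^2 + x24^2 + x34^2))
        - 2*(x12*v12 + x13*v13 + x14*v14 + x23*v23 + x24*v24 + x34*v34)
          *(x12*x34 - x13*x24 + x14*x23)); [ring|rewrite H1, H2; ring].
Qed.

Lemma lagrange e1 e2 e3 e4 x12 x13 x14 x23 x24 x34 a b :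
  x12^2 + x13^2 + x14^2 + x23^2 + x24^2 + x34^2 = 1 ->
  x12*x34 - x13*x24 + x14*x23 = 0 ->
  (forall V, tangent_Mh (mkL6 x12 x13 x14 x23 x24 x34) V ->
     a * dderiv (eta1 e1 e2 e3 e4) (mkL6 x12 x13 x14 x23 x24 x34) V
     + b * dderiv (eta2 e1 e2 e3 e4) (mkL6 x12 x13 x14 x23 x24 x34) V = 0) ->
  exists mu nu,
  (2*a*(e3+e4) + 2*b*(e3*e4) - mu) * x12 = nu * x34 /\
  (2*a*(e2+e4) + 2*b*(e2*e4) - mu) * x13 = - nu * x24 /\
  (2*a*(e2+e3) + 2*b*(e2*e3) - mu) * x14 = nu * x23 /\
  (2*a*(e1+e4) + 2*b*(e1*e4) - mu) * x23 = nu * x14 /\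
  (2*a*(e1+e3) + 2*b*(e1*e3) - mu) * x24 = - nu * x13 /\
  (2*a*(e1+e2) + 2*b*(e1*e2) - mu) * x34 = nu * x12.
Proof.
  intros H1 H2 Hc.
  set (L := mkL6 x12 x13 x14 x23 x24 x34) in *.
  exists (a * dderiv (eta1 e1 e2 e3 e4) L L + b * dderiv (eta2 e1 e2 e3 e4) L L).
  exists (a * dderiv (eta1 e1 e2 e3 e4) L (star L) + b * dderiv (eta2 e1 e2 e3 e4) L (star L)).
  pose proof (Hc _ (tangent_proj _ _ _ _ _ _ (mkL6 1 0 0 0 0 0) H1 H2)) as U12.
  pose proof (Hc _ (tangent_proj _ _ _ _ _ _ (mkL6 0 1 0 0 0 0) H1 H2)) as U13.
  pose proof (Hc _ (tangent_proj _ _ _ _ _ _ (mkL6 0 0 1 0 0 0) H1 H2)) as U14.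
  pose proof (Hc _ (tangent_proj _ _ _ _ _ _ (mkL6 0 0 0 1 0 0) H1 H2)) as U23.
  pose proof (Hc _ (tangent_proj _ _ _ _ _ _ (mkL6 0 0 0 0 1 0) H1 H2)) as U24.
  pose proof (Hc _ (tangent_proj _ _ _ _ _ _ (mkL6 0 0 0 0 0 1) H1 H2)) as U34.
  fold L in U12, U13, U14, U23, U24, U34. clear Hc.
  rewrite !dd_eta1, !dd_eta2 in *.
  unfold L, proj, star, dotL in *; prj.
  repeat split.
  - rewrite <- (Rminus_0_r (_ * x12)), <- U12 at 1. ring.
  - rewrite <- (Rminus_0_r (_ * x13)), <- U13 at 1. ring.
  - rewrite <- (Rminus_0_r (_ * x14)), <- U14 at 1. ring.
  - rewrite <- (Rminus_0_r (_ * x23)), <- U23 at 1. ring.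
  - rewrite <- (Rminus_0_r (_ * x24)), <- U24 at 1. ring.
  - rewrite <- (Rminus_0_r (_ * x34)), <- U34 at 1. ring.
Qed.


Lemma part1 e1 e2 e3 e4 p : e1 < e2 -> e2 < e3 -> e3 < e4 ->
  critical_value e1 e2 e3 e4 1 p ->
  on_line e1 p \/ on_line e2 p \/ on_line e3 p \/ on_line e4 p \/ on_C e2 e3 p.
Proof.
  intros O1 O2 O3 [L [[HM [a [b [Hab Hcrit]]]] Hp]]. subst p.
  destruct L as [x12 x13 x14 x23 x24 x34].
  destruct HM as [HC1 HC2]. unfold Cas1, Cas2 in HC1, HC2; prj.
  destruct (lagrange e1 e2 e3 e4 x12 x13 x14 x23 x24 x34 a b HC1 HC2 Hcrit)
    as [mu [nu [E12 [E13 [E14 [E23 [E24 E34]]]]]]].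
  destruct (Req_dec nu 0) as [Hn|Hn].
  - apply (core0 e1 e2 e3 e4 x12 x13 x14 x23 x24 x34 a b mu); auto.
    + rewrite E12, Hn; ring.
    + rewrite E13, Hn; ring.
    + rewrite E14, Hn; ring.
    + rewrite E23, Hn; ring.
    + rewrite E24, Hn; ring.
    + rewrite E34, Hn; ring.
  - right; right; right; right.
    apply (core1 e1 e2 e3 e4 x12 x13 x14 x23 x24 x34 a b mu nu
      (2*a*(e3+e4) + 2*b*(e3*e4) - mu) (2*a*(e2+e4) + 2*b*(e2*e4) - mu)
      (2*a*(e2+e3) + 2*b*(e2*e3) - mu) (2*a*(e1+e4) + 2*b*(e1*e4) - mu)
      (2*a*(e1+e3) + 2*b*(e1*e3) - mu) (2*a*(e1+e2) + 2*b*(e1*e2) - mu)); auto.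
Qed.

Lemma theta A B t : A < B -> A <= t <= B ->
  0 <= (t - A)/(B - A) /\ 0 <= 1 - (t - A)/(B - A).
Proof.
  intros H [H1 H2]. split.
  - apply Rmult_le_pos; [lra|]. left; apply Rinv_0_lt_compat; lra.
  - assert ((t - A)/(B - A) <= 1); [|lra].
    apply (Rmult_le_reg_r (B - A)); [lra|]. unfold Rdiv. rewrite Rmult_assoc, Rinv_l; lra.
Qed.

Ltac seg_tac A B mk lem :=
  exists A, B; split; [lra|]; intros t Ht;
  destruct (theta A B t ltac:(lra) Ht) as [T1 T2];
  set (th := (t - A)/(B - A)) in *;
  exists (mk (sqrt th) (sqrt (1 - th)));
  split; [apply lem; rewrite !pow2_sqrt by auto; ring
         | unfold eta1, eta2; prj; rewrite !pow2_sqrt by auto; unfold th;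
           f_equal; field; lra].

Lemma part2 e1 e2 e3 e4 : e1 < e2 -> e2 < e3 -> e3 < e4 ->
  let e := fun i : nat => match i with 1%nat => e1 | 2%nat => e2 | 3%nat => e3 | _ => e4 end in
  forall i : nat, (1 <= i <= 4)%nat ->
     exists a b, a < b /\ forall t, a <= t <= b -> critical_value e1 e2 e3 e4 1 (t, e i * (t - e i)).
Proof.
  intros O1 O2 O3 e i Hi.
  destruct i as [|[|[|[|[|i]]]]]; try lia; unfold e.
  - seg_tac (e1+e3) (e1+e4) (fun u v => mkL6 0 0 0 u v 0) line1_crit.
  - seg_tac (e2+e3) (e2+e4) (fun u v => mkL6 0 u v 0 0 0) line2_crit.
  - seg_tac (e2+e3) (e3+e4) (fun u v => mkL6 u 0 v 0 0 0) line3_crit.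
  - seg_tac (e2+e4) (e3+e4) (fun u v => mkL6 u v 0 0 0 0) line4_crit.
Qed.


Lemma part3 e1 e2 e3 e4 p : e1 < e2 -> e2 < e3 -> e3 < e4 ->
  on_C e2 e3 p -> critical_value e1 e2 e3 e4 1 p.
Proof.
  intros O1 O2 O3 [t [[Ht2 Ht3] Hp]]. subst p.
  set (K := (e4 - e1) * (e3 - e2)).
  assert (HK : 0 < K) by (apply Rmult_lt_0_compat; lra).
  assert (HsK : 0 < sqrt K) by (apply sqrt_lt_R0; auto).
  destruct (arc_crit e1 e2 e3 e4 t (sqrt (t - e1)) (sqrt (t - e2)) (sqrt (e3 - t))
              (sqrt (e4 - t)) (/ sqrt K)) as [Hc [Ee1 Ee2]].
  - rewrite pow2_sqrt by lra; ring.
  - rewrite pow2_sqrt by lra; ring.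
  - rewrite pow2_sqrt by lra; ring.
  - rewrite pow2_sqrt by lra; ring.
  - rewrite !pow2_sqrt by lra.
    replace ((t - e1 + (e4 - t)) * (t - e2 + (e3 - t))) with K by (unfold K; ring).
    replace ((/ sqrt K)^2) with (/ (sqrt K ^ 2)) by (field; lra).
    rewrite pow2_sqrt by lra. field; lra.
  - eexists; split; [exact Hc|]. rewrite Ee1, Ee2. reflexivity.
Qed.

Lemma inter2 u v p : u <> v ->
  (on_line u p /\ on_line v p <-> p = (u + v, u * v)).
Proof.
  intro Huv. destruct p as [X Y]. unfold on_line; cbn [fst snd]. split.
  - intros [H1 H2].
    assert (HX : X = u + v).
    { apply (Rmult_eq_reg_l (v - u)); [lra|]. intro; apply Huv; lra. }
    subst X. f_equal. lra.
  - intro H. injection H as -> ->. split; ring.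
Qed.

Lemma sq0' x : x^2 = 0 -> x = 0.
Proof. intro H. destruct (Req_dec x 0) as [?|Hn]; [auto|]. exfalso; exact (pow_nonzero x 2 Hn H). Qed.

Lemma tang u p : (on_line u p /\ on_parabola p <-> p = (2 * u, u ^ 2)).
Proof.
  destruct p as [X Y]. unfold on_line, on_parabola; cbn [fst snd]. split.
  - intros [H1 H2].
    assert (HX : X = 2*u).
    { assert (Q : (X - 2*u)^2 = 0) by lra. apply sq0' in Q. lra. }
    subst X. f_equal. lra.
  - intro H. injection H as -> ->. split; field.
Qed.

Lemma der u : Derive (fun x => x ^ 2 / 4) (2 * u) = u.
Proof. apply is_derive_unique. auto_derive; [auto|field]. Qed.

Ltac dij_tac :=
  first
  [ exists (mkL6 0 0 0 0 0 1); split; [apply line1_crit; ring | unfold eta1, eta2; prj; f_equal; ring]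
  | exists (mkL6 0 0 0 0 1 0); split; [apply line1_crit; ring | unfold eta1, eta2; prj; f_equal; ring]
  | exists (mkL6 0 0 0 1 0 0); split; [apply line1_crit; ring | unfold eta1, eta2; prj; f_equal; ring]
  | exists (mkL6 0 0 1 0 0 0); split; [apply line2_crit; ring | unfold eta1, eta2; prj; f_equal; ring]
  | exists (mkL6 0 1 0 0 0 0); split; [apply line2_crit; ring | unfold eta1, eta2; prj; f_equal; ring]
  | exists (mkL6 1 0 0 0 0 0); split; [apply line3_crit; ring | unfold eta1, eta2; prj; f_equal; ring] ].

Lemma part4 e1 e2 e3 e4 : e1 < e2 -> e2 < e3 -> e3 < e4 ->
  let e := fun i : nat => match i with 1%nat => e1 | 2%nat => e2 | 3%nat => e3 | _ => e4 end in
  forall i j : nat, (1 <= i <= 4)%nat -> (1 <= j <= 4)%nat -> i <> j ->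
     e i <> e j /\
     (forall p, on_line (e i) p /\ on_line (e j) p <-> p = (e i + e j, e i * e j)) /\
     critical_value e1 e2 e3 e4 1 (e i + e j, e i * e j).
Proof.
  intros O1 O2 O3 e i j Hi Hj Hij.
  assert (Hne : e i <> e j).
  { destruct i as [|[|[|[|[|i]]]]]; try lia; destruct j as [|[|[|[|[|j]]]]]; try lia;
    unfold e; intro; lra. }
  split; [exact Hne|]. split; [intro p; apply inter2; exact Hne|].
  destruct i as [|[|[|[|[|i]]]]]; try lia; destruct j as [|[|[|[|[|j]]]]]; try lia;
    unfold e; dij_tac.
Qed.

Theorem proposition3 (e1 e2 e3 e4 : R) :
  e1 < e2 < e3 /\ e3 < e4 ->
  let e := fun i : nat => match i with 1%nat => e1 | 2%nat => e2 | 3%nat => e3 | _ => e4 end in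
  let CV := critical_value e1 e2 e3 e4 1 in
  (* the critical values lie on the four lines and the parabola arc C *)
  (forall p, CV p ->
     on_line e1 p \/ on_line e2 p \/ on_line e3 p \/ on_line e4 p \/ on_C e2 e3 p) /\
  (* each line L_i contributes a (nondegenerate) part of the critical values *)
  (forall i : nat, (1 <= i <= 4)%nat ->
     exists a b, a < b /\ forall t, a <= t <= b -> CV (t, e i * (t - e i))) /\
  (* the whole arc C consists of critical values *)
  (forall p, on_C e2 e3 p -> CV p) /\
  (* six transverse intersections L_i /\ L_j at d_ij = (e_i+e_j, e_i e_j) *)
  (forall i j : nat, (1 <= i <= 4)%nat -> (1 <= j <= 4)%nat -> i <> j ->
     e i <> e j /\
     (forall p, on_line (e i) p /\ on_line (e j) p <-> p = (e i + e j, e i * e j)) /\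
     CV (e i + e j, e i * e j)) /\
  (* d_i = (2e_i, e_i^2), i in {2,3}: tangential intersections of L_i with C *)
  (forall i : nat, (i = 2 \/ i = 3)%nat ->
     on_C e2 e3 (2 * e i, e i ^ 2) /\ CV (2 * e i, e i ^ 2) /\
     (forall p, on_line (e i) p /\ on_parabola p <-> p = (2 * e i, e i ^ 2)) /\
     (* tangency: slope of L_i equals the slope of the parabola at d_i *)
     Derive (fun x => x ^ 2 / 4) (2 * e i) = e i).
Proof.
  intros [[O1 O2] O3] e CV.
  split; [intros p Hp; apply part1; auto|].
  split; [apply (part2 e1 e2 e3 e4 O1 O2 O3)|].
  split; [intros p Hp; apply part3; auto|].
  split; [apply (part4 e1 e2 e3 e4 O1 O2 O3)|].
  intros i Hi.
  assert (HC : on_C e2 e3 (2 * e i, e i ^ 2)).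
  { destruct Hi as [-> | ->]; unfold e.
    - exists e2; split; [lra|reflexivity].
    - exists e3; split; [lra|reflexivity]. }
  split; [exact HC|]. split; [apply part3; auto|].
  split; [intro p; apply tang|apply der].
Qed.
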